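(* Let $\overline{C}(\alpha,N)$ and $\overline{C}(\alpha)$ be as defined in the context. Then: (1) For real $0\le\alpha\le2$, $\overline{C}(\alpha,1)=0$ and $\overline{C}(\alpha,2)=1$. (2) For real $0\le\alpha\le2$ and positive integers $N$, $\overline{C}(\alpha,N)\le\overline{C}(\alpha,N+1)$. (3) For real $0\le\alpha\le2$ and positive integers $N$, $0\le\overline{C}(\alpha,N)\le N-1$. (4) For real $0\le\alpha\le2$, $\overline{C}(\alpha)=\lim_{N\to\infty}\overline{C}(\alpha,N)$.
   Context: For a strictly increasing sequence $(\lambda_k)_{k=-\infty}^{\infty}$ of real numbers, put $\delta_k:=\min\{\lambda_k-\lambda_{k-1},\lambda_{k+1}-\lambda_k\}$. For $0\le\alpha\le2$ and a positive integer $N$, let $\overline{C}(\alpha,N)$ be the minimum of all constants $C(\alpha,N)$ such that $$\sum_{m=1}^N\sum_{\substack{n=1\\ n\ne m}}^N\frac{\delta_m^{2-\alpha}\delta_n^{\alpha}t_mt_n}{(\lambda_m-\lambda_n)^2}\le C(\alpha,N)\sum_{n=1}^N t_n^2$$ holds for every strictly increasing real sequence $(\lambda_k)_{k\in\mathbb Z}$ and all nonnegative reals $t_1,\dots,t_N$. Let $\overline{C}(\alpha)$ be the minimum of all constants $C(\alpha)$ for which the same inequality (with $C(\alpha)$ in place of $C(\alpha,N)$) holds for every positive integer $N$, every such sequence and all nonnegative $t_1,\dots,t_N$; set $\overline{C}(\alpha)=\infty$ if no such real constant exists. *)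

(* Defs.v *)
From HB Require Import structures.
From mathcomp Require Import all_boot all_order all_algebra.
From mathcomp Require Import all_classical all_reals all_analysis.
Set Implicit Arguments. Unset Strict Implicit. Unset Printing Implicit Defensive.
Import Order.TTheory GRing.Theory Num.Theory.
Local Open Scope ring_scope.
Local Open Scope classical_set_scope.

Section Defs.
Variable R : realType.

Definition strictly_increasing (lam : int -> R) : Prop :=
  forall k : int, lam k < lam (k + 1).

Definition delta (lam : int -> R) (k : int) : R :=
  Num.min (lam k - lam (k - 1)) (lam (k + 1) - lam k).

Definition lhs (alpha : R) (N : nat) (lam : int -> R) (t : nat -> R) : R :=
  \sum_(1 <= m < N.+1) \sum_(1 <= n < N.+1 | n != m)
     (delta lam m%:Z `^ (2 - alpha) * delta lam n%:Z `^ alpha * t m * t n)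
       / (lam m%:Z - lam n%:Z) ^+ 2.

Definition sumsq (N : nat) (t : nat -> R) : R :=
  \sum_(1 <= n < N.+1) t n ^+ 2.

Definition admissible (alpha : R) (N : nat) (C : R) : Prop :=
  forall (lam : int -> R) (t : nat -> R),
    strictly_increasing lam ->
    (forall n, (1 <= n <= N)%N -> 0 <= t n) ->
    lhs alpha N lam t <= C * sumsq N t.

Definition admissible_all (alpha : R) (C : R) : Prop :=
  forall N : nat, (0 < N)%N -> admissible alpha N C.

Definition Cbar (alpha : R) (N : nat) : \bar R :=
  ereal_inf (EFin @` [set C | admissible alpha N C]).

(* \overline{C}(alpha): least admissible uniform constant; +oo if none exists *)
Definition Cbar_inf (alpha : R) : \bar R :=
  ereal_inf (EFin @` [set C | admissible_all alpha C]).

End Defs.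

(* Main.v *)
Require Import Defs.
From HB Require Import structures.
From mathcomp Require Import all_boot all_order all_algebra.
From mathcomp Require Import all_classical all_reals all_analysis.
From mathcomp Require Import ring lra.
Import Order.TTheory GRing.Theory Num.Theory.
Local Open Scope ring_scope.
Local Open Scope classical_set_scope.

Set Implicit Arguments.
Section S.
Variable R : realType.
Implicit Types (alpha : R) (lam : int -> R) (t : nat -> R).

Lemma sumsq_ge0 N t : 0 <= sumsq N t.
Proof. by apply: sumr_ge0 => i _; apply: sqr_ge0. Qed.

Lemma adm_up alpha N C C' : admissible alpha N C -> C <= C' -> admissible alpha N C'.
Proof.
move=> hC le lam t hl ht; apply: le_trans (hC lam t hl ht) _.
by apply: ler_wpM2r => //; apply: sumsq_ge0.
Qed.

Lemma adm_closed alpha N r : (forall e, 0 < e -> admissible alpha N (r + e)) ->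
  admissible alpha N r.
Proof.
move=> he lam t hl ht; have s0 := sumsq_ge0 N t.
have [s00|sp] := eqVneq (sumsq N t) 0.
  by have := he 1 ltr01 lam t hl ht; rewrite s00 !mulr0.
have sg : 0 < sumsq N t by rewrite lt_def sp s0.
apply/ler_addgt0Pr => e e0.
have := he (e / sumsq N t) (divr_gt0 e0 sg) lam t hl ht.
by rewrite mulrDl divfK.
Qed.

Lemma incr_le lam : strictly_increasing lam -> forall i j : int, i <= j -> lam i <= lam j.
Proof.
move=> hl i j hij.
have : 0 <= j - i by rewrite subr_ge0.
have <- : (j - i) + i = j by rewrite subrK.
case: (j - i) => [n _|n h]; last by move: h; rewrite addrK.
elim: n => [|n IH]; first by rewrite add0r.
apply: le_trans IH _.
have -> : (n.+1%:Z + i) = (n%:Z + i) + 1 by rewrite -addn1 PoszD addrAC.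
exact/ltW/hl.
Qed.

End S.
Section S_H2.
Variable R : realType.
Implicit Types (alpha : R) (lam : int -> R) (t : nat -> R).

Lemma delta_gt0 lam k : strictly_increasing lam -> 0 < delta lam k.
Proof.
move=> hl; rewrite /delta lt_min !subr_gt0 hl /=.
by have := hl (k - 1); rewrite subrK andbT.
Qed.

Lemma delta_le lam m n : strictly_increasing lam -> m != n ->
  delta lam m <= `|lam m - lam n|.
Proof.
move=> hl; rewrite neq_lt => /orP[] hmn.
- rewrite distrC ger0_norm ?subr_ge0; last exact: (incr_le hl) (ltW hmn).
  rewrite /delta ge_min; apply/orP; right; rewrite lerD2r.
  by apply: (incr_le hl); rewrite lezD1.
- rewrite ger0_norm ?subr_ge0; last exact: (incr_le hl) (ltW hmn).
  rewrite /delta ge_min; apply/orP; left; rewrite lerD2l lerN2.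
  by apply: (incr_le hl); rewrite lerBrDr lezD1.
Qed.

Lemma term_le alpha lam m n : 0 <= alpha <= 2 -> strictly_increasing lam -> m != n ->
  0 <= delta lam m `^ (2 - alpha) * delta lam n `^ alpha <= (lam m - lam n) ^+ 2.
Proof.
move=> /andP[a0 a2] hl mn; rewrite mulr_ge0 ?powR_ge0 //=.
set d := `|lam m - lam n|.
have d0 : 0 <= d by rewrite /d normr_ge0.
have -> : (lam m - lam n) ^+ 2 = d `^ (2 - alpha) * d `^ alpha.
  rewrite -powRD; last by rewrite subrK pnatr_eq0.
  by rewrite subrK -[2]/(2%:R) powR_mulrn // real_normK // num_real.
apply: ler_pM; rewrite ?powR_ge0 //; apply: ge0_ler_powR; rewrite ?nnegrE ?subr_ge0 //.
all: try exact/ltW/delta_gt0.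
- by rewrite /d; apply: delta_le.
- by rewrite /d distrC; apply: delta_le; rewrite // eq_sym.
Qed.

End S_H2.
Section S_H3.
Variable R : realType.
Implicit Types (alpha : R) (lam : int -> R) (t : nat -> R).

Lemma sum_neq (F : nat -> R) N m : (1 <= m < N.+1)%N ->
  \sum_(1 <= n < N.+1 | n != m) F n = \sum_(1 <= n < N.+1) F n - F m.
Proof.
move=> hm; rewrite [in RHS](bigD1_seq m) ?mem_index_iota ?iota_uniq //.
by rewrite addrAC subrr add0r.
Qed.

Lemma sum_cross N t : (forall n, (1 <= n <= N)%N -> 0 <= t n) ->
  \sum_(1 <= m < N.+1) \sum_(1 <= n < N.+1 | n != m) t m * t n
    <= (N%:R - 1) * sumsq N t.
Proof.
move=> ht.
set S := sumsq N t.
apply: le_trans (_ : \sum_(1 <= m < N.+1) \sum_(1 <= n < N.+1 | n != m)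
    ((t m ^+ 2 + t n ^+ 2) / 2) <= _).
  apply: ler_sum => m _; apply: ler_sum => n _.
  rewrite ler_pdivlMr // -subr_ge0.
  have -> : t m ^+ 2 + t n ^+ 2 - t m * t n * 2 = (t m - t n) ^+ 2 by ring.
  exact: sqr_ge0.
rewrite le_eqVlt; apply/orP; left; apply/eqP.
rewrite (@eq_big_nat _ _ _ _ _ _
   (fun m => (N%:R * t m ^+ 2 + S - 2 * t m ^+ 2) / 2)); last first.
  move=> m hm; rewrite sum_neq // -mulr_suml big_split /= sumr_const_nat subn1 /=.
  rewrite -/(sumsq N t) -/S.
  by rewrite -mulr_natl; ring.
rewrite -mulr_suml sumrB big_split /= -!mulr_sumr sumr_const_nat subn1 /=.
rewrite -/(sumsq N t) -/S -mulr_natl.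
by field.
Qed.

Lemma adm_upper alpha N : 0 <= alpha <= 2 -> admissible alpha N (N%:R - 1).
Proof.
move=> ha lam t hl ht.
rewrite /lhs.
have H := @sum_cross N t ht.
apply: (le_trans _ H).
apply: ler_sum_nat => m hm.
rewrite big_nat_cond [X in _ <= X]big_nat_cond; apply: ler_sum => n /andP[hn nm].
have hmn : m%:Z != n%:Z by rewrite eq_sym.
have /andP[p0 p1] := @term_le R alpha lam m n ha hl hmn.
have dpos : 0 < `|lam m - lam n| := lt_le_trans (delta_gt0 (m:int) hl) (@delta_le R lam m n hl hmn).
have d0 : 0 < (lam m%:Z - lam n%:Z) ^+ 2.
  by rewrite -real_normK ?num_real // exprn_gt0.
have tm : 0 <= t m by apply: ht; rewrite -ltnS.
have tn : 0 <= t n by apply: ht; rewrite -ltnS.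
set A := _ * _ `^ alpha in p0 p1 *; set D := (_ - _) ^+ 2 in p1 d0 *.
have -> : A * t m * t n / D = (A / D) * (t m * t n) by rewrite !mulrA; ring.
apply: ler_piMl; first by rewrite mulr_ge0.
by rewrite ler_pdivrMr // mul1r.
Qed.

End S_H3.
Section S_H4.
Variable R : realType.
Implicit Types (alpha : R) (lam : int -> R) (t : nat -> R).

Definition lamZ : int -> R := fun k => k%:~R.

Lemma lamZ_incr : strictly_increasing lamZ.
Proof. by move=> k; rewrite /lamZ intrD ltrDl ltr01. Qed.

Lemma delta_lamZ k : delta lamZ k = 1.
Proof.
rewrite /delta /lamZ.
have -> : (k%:~R - (k - 1)%:~R : R) = 1 by rewrite intrD; ring.
have -> : ((k + 1)%:~R - k%:~R : R) = 1 by rewrite intrD; ring.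
by rewrite minxx.
Qed.

Lemma adm_ge0 alpha N C : (0 < N)%N -> admissible alpha N C -> 0 <= C.
Proof.
move=> N0 hC.
pose t : nat -> R := fun n => (n == 1)%:R.
have := hC lamZ t lamZ_incr (fun n _ => ler0n _ _).
have -> : lhs alpha N lamZ t = 0.
  rewrite /lhs; apply: big1 => m _; apply: big1 => n nm.
  rewrite /t; have [hm|m1] := eqVneq m 1%N.
    rewrite hm in nm *.
    by rewrite (negPf nm) mulr0 mul0r.
  by rewrite mulr0 mul0r mul0r.
have -> : sumsq N t = 1.
  rewrite /sumsq big_ltn ?ltnS // /t eqxx expr1n big1_seq ?addr0 // => n /andP[_].
  rewrite mem_index_iota => /andP[n1 _].
  by rewrite eqn_leq [(n <= 1)%N]leqNgt n1 /= expr0n.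
by rewrite mulr1.
Qed.

Lemma adm2_ge1 alpha C : admissible alpha 2 C -> 1 <= C.
Proof.
move=> hC.
have := hC lamZ (fun=> 1) lamZ_incr (fun n _ => ler01).
have E : lhs alpha 2 lamZ (fun=> 1) = 2.
  rewrite /lhs big_ltn // big_ltn // big_geq //.
  rewrite big_mkcond big_ltn // big_ltn // big_geq //.
  rewrite big_mkcond big_ltn // big_ltn // big_geq //.
  rewrite !delta_lamZ powR1 /lamZ.
  rewrite !eqxx /=.
  rewrite !mul1r !addr0 !add0r.
  have -> : (1%Z%:~R : R) = 1 by [].
  have -> : (2%Z%:~R : R) = 2 by [].
  have -> : (1 - 2 : R) ^+ 2 = 1 by ring.
  have -> : (2 - 1 : R) ^+ 2 = 1 by ring.
  by rewrite invr1; ring.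
have S2 : sumsq 2 (fun=> (1:R)) = 2.
  by rewrite /sumsq big_ltn // big_ltn // big_geq // !expr1n addr0.
rewrite E S2 => h; lra.
Qed.



End S_H4.
Section S_H5.
Variable R : realType.
Implicit Types (alpha : R) (lam : int -> R) (t : nat -> R).

Lemma adm0 alpha C : admissible alpha 0 C.
Proof.
move=> lam t _ _; by rewrite /lhs /sumsq big_geq // big_geq // mulr0.
Qed.

Lemma adm_mono alpha N C : admissible alpha N.+1 C -> admissible alpha N C.
Proof.
move=> hC lam t hl ht.
pose t' := fun n => if n == N.+1 then 0 else t n.
have ht' : forall n, (1 <= n <= N.+1)%N -> 0 <= t' n.
  move=> n /andP[n1 nN]; rewrite /t'; case: eqP => // /eqP nN1.
  by apply: ht; rewrite n1 /= -ltnS ltn_neqAle nN1 nN.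
have t'N : t' N.+1 = 0 by rewrite /t' /= eqxx.
have := hC lam t' hl ht'.
have -> : sumsq N.+1 t' = sumsq N t.
  rewrite /sumsq big_nat_recr //= t'N expr0n addr0.
  apply: eq_big_nat => n /andP[_ nN]; rewrite /t' ifF //.
  by apply/negbTE; rewrite neq_ltn nN.
have -> : lhs alpha N.+1 lam t' = lhs alpha N lam t.
  rewrite /lhs big_nat_recr //= [X in _ + X]big1 ?addr0; last first.
    move=> n _.
    by rewrite t'N mulr0 mul0r mul0r.
  apply: eq_big_nat => m /andP[_ mN].
  have tm : t' m = t m by rewrite /t' ifF //; apply/negbTE; rewrite neq_ltn mN.
  rewrite big_mkcond big_nat_recr //= t'N mulr0 mul0r.
  rewrite ifT ?addr0; last by rewrite neq_ltn mN orbT.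
  rewrite [RHS]big_mkcond; apply: eq_big_nat => n /andP[_ nN].
  have tn : t' n = t n by rewrite /t' ifF //; apply/negbTE; rewrite neq_ltn nN.
  by rewrite tm tn.
by [].
Qed.

Local Open Scope ereal_scope.

Lemma Cbar_le alpha N C : admissible alpha N C -> Cbar alpha N <= C%:E.
Proof. by move=> h; apply: ge_ereal_inf; exists C%:E => //; exists C. Qed.

Lemma Cbar_ge0 alpha N : (0 < N)%N -> 0%:E <= Cbar alpha N.
Proof.
move=> N0; apply: le_ereal_inf_tmp => _ [C hC <-]; rewrite lee_fin.
exact: adm_ge0 hC.
Qed.

Lemma Cbar_adm alpha N r : Cbar alpha N <= r%:E -> admissible alpha N r.
Proof.
move=> h; apply: adm_closed => e e0.
have : Cbar alpha N < (r + e)%:E by apply: le_lt_trans h _; rewrite lte_fin ltrDl.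
move=> /ereal_inf_lt [_ [C hC <-]]; rewrite lte_fin => Clt.
exact: adm_up hC (ltW Clt).
Qed.

Lemma Cbar_mono alpha N : Cbar alpha N <= Cbar alpha N.+1.
Proof.
apply: ereal_inf_le_tmp => _ [C hC <-]; exists C => //; exact: adm_mono.
Qed.

Lemma Cbar_inf_sup alpha : Cbar_inf alpha = ereal_sup (range (Cbar alpha)).
Proof.
apply/eqP; rewrite eq_le; apply/andP; split; last first.
  apply: ge_ereal_sup => _ [N _ <-].
  apply: ereal_inf_le_tmp => _ [C hC <-]; exists C => //.
  by case: N => [|N]; [exact: adm0 | apply: hC].
set s := ereal_sup _.
have s0 : 0%:E <= s.
  by apply: le_trans (@Cbar_ge0 alpha 1%N isT) _; apply: ereal_sup_ubound; exists 1%N.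
have Hub N : Cbar alpha N <= s by apply: ereal_sup_ubound; exists N.
case: s Hub s0 => [r Hub s0|_ _|//]; last exact: leey.
apply: ge_ereal_inf; exists r%:E => //; exists r => // N N0.
exact: Cbar_adm (Hub N).
Qed.

Lemma Cbar_cvg alpha : Cbar alpha @ \oo --> Cbar_inf alpha.
Proof.
rewrite Cbar_inf_sup; apply: ereal_nondecreasing_cvgn.
by apply/nondecreasing_seqP => n; exact: Cbar_mono.
Qed.


End S_H5.

Theorem proposition2 (R : realType) :
  (forall alpha : R, 0 <= alpha <= 2 ->
     Cbar alpha 1 = 0%:E /\ Cbar alpha 2 = 1%:E) /\
  (forall (alpha : R) (N : nat), 0 <= alpha <= 2 -> (0 < N)%N ->
     (Cbar alpha N <= Cbar alpha N.+1)%E) /\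
  (forall (alpha : R) (N : nat), 0 <= alpha <= 2 -> (0 < N)%N ->
     (0%:E <= Cbar alpha N)%E /\ (Cbar alpha N <= (N%:R - 1)%:E)%E) /\
  (forall alpha : R, 0 <= alpha <= 2 ->
     Cbar alpha @ \oo --> Cbar_inf alpha).
Proof.
split; [move=> a ha; split|split; [|split]].
- apply/eqP; rewrite eq_le (@Cbar_ge0 R a 1%N isT) andbT.
  by have := @Cbar_le R a 1%N _ (@adm_upper R a 1%N ha); rewrite subrr.
- apply/eqP; rewrite eq_le; apply/andP; split.
    by have := @Cbar_le R a 2%N _ (@adm_upper R a 2%N ha); rewrite (_ : 2%:R - 1 = 1 :> R) //; lra.
  apply: le_ereal_inf_tmp => _ [C hC <-]; rewrite lee_fin.
  exact: adm2_ge1 hC.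
- by move=> a N _ _; exact: Cbar_mono.
- move=> a N ha N0; split; first exact: Cbar_ge0.
  exact/Cbar_le/adm_upper.
- by move=> a _; exact: Cbar_cvg.
Qed.
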